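(* For any fence $F$, $\dim I_H(F)=\dim A_H(F)$.
   Context: A fence $\breve F(\alpha_1,\dots,\alpha_t)$ ($t\ge2$, positive integers, $\alpha_1,\alpha_t\ge2$) is the poset on $\{x_1,\dots,x_n\}$, $n=\alpha_1+\dots+\alpha_t-1$, with $a_i=\alpha_1+\dots+\alpha_i$, $a_0=0$, whose cover relations are: for $1\le j\le n-1$ with $a_{i-1}\le j<a_i$, $x_j\lessdot x_{j+1}$ if $i$ odd and $x_j\gtrdot x_{j+1}$ if $i$ even. $\mathcal J(F)$ is the set of order ideals; rowmotion $\rho$ sends $I$ to the order ideal generated by $\min(F\setminus I)$. A statistic $f:\mathcal J(F)\to\mathbb R$ is homomesic under rowmotion if its average over every $\rho$-orbit is the same constant. $\hat\chi_q(I)=1$ if $q\in I$, else 0; $\chi_q(I)=1$ if $q\in\max(I)$, else 0. $I_H(F)$ (resp. $A_H(F)$) is the subspace of $\operatorname{Span}_{\mathbb R}\{\hat\chi_q:q\in F\}$ (resp. $\operatorname{Span}_{\mathbb R}\{\chi_q:q\in F\}$) consisting of statistics homomesic under rowmotion. *)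

(* Defs.v *)
From HB Require Import structures.
From mathcomp Require Import all_boot all_order all_algebra.
From mathcomp Require Import reals.
Set Implicit Arguments. Unset Strict Implicit. Unset Printing Implicit Defensive.
Import Order.TTheory GRing.Theory Num.Theory.

Definition is_fence_param (alpha : seq nat) : bool :=
  [&& 2 <= size alpha, all (fun a => 0 < a) alpha,
      2 <= head 0 alpha & 2 <= last 0 alpha].

Definition fence_a (alpha : seq nat) (i : nat) : nat := sumn (take i alpha).

Definition fence_n (alpha : seq nat) : nat := (sumn alpha).-1.

(* for 1 <= j <= n-1: the step x_j -- x_{j+1} lies in block i (1-based),
   a_{i-1} <= j < a_i; it goes up (x_j <. x_{j+1}) if i is odd,
   down (x_j >. x_{j+1}) if i is even.  We index by i' = i - 1. *)
Definition step_up (alpha : seq nat) (j : nat) : bool :=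
  [exists i : 'I_(size alpha),
     [&& fence_a alpha i <= j, j < fence_a alpha i.+1 & odd i.+1]].
Definition step_down (alpha : seq nat) (j : nat) : bool :=
  [exists i : 'I_(size alpha),
     [&& fence_a alpha i <= j, j < fence_a alpha i.+1 & ~~ odd i.+1]].

(* Elements x_1, ..., x_n are represented by u : 'I_n with x_{u+1}. *)
Notation fence alpha := 'I_(fence_n alpha).

Definition fcover (alpha : seq nat) : rel (fence alpha) :=
  fun u v =>
    ((v == u.+1 :> nat) && step_up alpha u.+1)
    || ((u == v.+1 :> nat) && step_down alpha v.+1).

Definition fle (alpha : seq nat) : rel (fence alpha) := connect (@fcover alpha).

Definition is_ideal (alpha : seq nat) (I : {set fence alpha}) : bool :=
  [forall p, forall q, fle p q ==> (q \in I) ==> (p \in I)].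

Definition ideal (alpha : seq nat) := {I : {set fence alpha} | is_ideal I}.

Definition min_compl (alpha : seq nat) (I : {set fence alpha}) (q : fence alpha) :=
  (q \notin I) && [forall r, (r \notin I) ==> fle r q ==> (r == q)].

Definition max_in (alpha : seq nat) (I : {set fence alpha}) (q : fence alpha) :=
  (q \in I) && [forall r, (r \in I) ==> fle q r ==> (r == q)].

Definition rowmotion_set (alpha : seq nat) (I : {set fence alpha}) :
  {set fence alpha} :=
  [set p | [exists q, min_compl I q && fle p q]].

Lemma rowmotion_set_ideal (alpha : seq nat) (I : {set fence alpha}) :
  is_ideal (rowmotion_set I).
Proof.
apply/forallP=> p; apply/forallP=> q; apply/implyP=> lepq; apply/implyP.
rewrite !inE => /existsP [r /andP [mr leqr]].
by apply/existsP; exists r; rewrite mr /=; exact: connect_trans lepq leqr.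
Qed.

Definition rowmotion (alpha : seq nat) (I : ideal alpha) : ideal alpha :=
  exist _ (rowmotion_set (sval I)) (rowmotion_set_ideal (sval I)).

Section Stats.
Local Open Scope ring_scope.
Variable R : realType.
Variable alpha : seq nat.

Definition stat := {ffun ideal alpha -> R^o}.

Definition rho_orbit (I : ideal alpha) : {set ideal alpha} :=
  [set J | fconnect (@rowmotion alpha) I J].

Definition orbit_avg (f : stat) (I : ideal alpha) : R :=
  (\sum_(J in rho_orbit I) f J) / #|rho_orbit I|%:R.

Definition homomesic (f : stat) : Prop :=
  exists c : R, forall I : ideal alpha, orbit_avg f I = c.

Definition chihat (q : fence alpha) : stat :=
  [ffun I : ideal alpha => if q \in sval I then 1 else 0].
Definition chi (q : fence alpha) : stat :=
  [ffun I : ideal alpha => if max_in (sval I) q then 1 else 0].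

Definition span_chihat : {vspace stat} := <<[seq chihat q | q <- enum (fence alpha)]>>%VS.
Definition span_chi : {vspace stat} := <<[seq chi q | q <- enum (fence alpha)]>>%VS.

Definition I_H (f : stat) : Prop := f \in span_chihat /\ homomesic f.
Definition A_H (f : stat) : Prop := f \in span_chi /\ homomesic f.

Definition has_dim (H : stat -> Prop) (d : nat) : Prop :=
  exists s : seq stat,
    [/\ size s = d, free s, (forall v, v \in s -> H v)
      & forall v, H v -> v \in <<s>>%VS].

End Stats.

(* Main.v *)
Require Import Defs.
From HB Require Import structures.
From mathcomp Require Import all_boot all_order all_algebra.
From mathcomp Require Import reals zify.
Set Implicit Arguments. Unset Strict Implicit. Unset Printing Implicit Defensive.
Import Order.TTheory GRing.Theory Num.Theory.

Section Comb.
Variable alpha : seq nat.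
Local Notation F := (fence alpha).

Lemma fence_a_mono i j : i <= j -> fence_a alpha i <= fence_a alpha j.
Proof. by move=> lij; rewrite /fence_a -(subnKC lij) takeD sumn_cat leq_addr. Qed.

Lemma step_excl j : step_up alpha j -> step_down alpha j -> False.
Proof.
case/existsP=> i /and3P[h1 h2 h3]; case/existsP=> k /and3P[k1 k2 k3].
have e : nat_of_ord i = k.
  apply/eqP; rewrite eqn_leq; apply/andP; split; rewrite leqNgt; apply/negP=> lt.
  - by have := leq_trans (fence_a_mono lt) h1; rewrite leqNgt k2.
  - by have := leq_trans (fence_a_mono lt) k1; rewrite leqNgt h2.
by rewrite -e h3 in k3.
Qed.

Definition hgt (u : nat) : int :=
  \sum_(k < u) (if step_up alpha k.+1 then 1 else -1)%R.

Lemma hgt_S u : hgt u.+1 = (hgt u + (if step_up alpha u.+1 then 1 else -1))%R.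
Proof. by rewrite /hgt big_ord_recr. Qed.

Lemma fcover_hgt (u v : F) : fcover u v -> hgt v = (hgt u + 1)%R.
Proof.
case/orP=> /andP[/eqP e s].
- by rewrite e hgt_S s.
- rewrite e hgt_S; have ->: step_up alpha v.+1 = false.
    by apply/negbTE/negP => su; exact: step_excl su s.
  by rewrite addrNK.
Qed.

Lemma path_hgt (p : seq F) (u : F) :
  path (@fcover alpha) u p -> (hgt u + (size p)%:Z)%R = hgt (last u p).
Proof.
elim: p u => [|x p IH] u /=; first by rewrite addr0.
case/andP=> c pth; rewrite -(IH x pth) (fcover_hgt c).
by rewrite -addrA; congr (_ + _)%R; rewrite -natz; lia.
Qed.

Lemma fle_hgt (u v : F) : fle u v -> (hgt u <= hgt v)%R.
Proof.
case/connectP=> p pth ->; rewrite -(path_hgt pth); lia.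
Qed.

Lemma fle_hgt_lt (u v : F) : fle u v -> u != v -> (hgt u < hgt v)%R.
Proof.
case/connectP=> p pth e; rewrite e -(path_hgt pth).
case: p pth e => [|x p] pth e /=; first by rewrite eqxx.
move=> _; lia.
Qed.

Lemma fle_anti (u v : F) : fle u v -> fle v u -> u = v.
Proof.
move=> uv vu; apply/eqP; apply/negPn/negP=> ne.
have := fle_hgt_lt uv ne; have := fle_hgt vu; lia.
Qed.

Lemma fle_refl (u : F) : fle u u. Proof. exact: connect0. Qed.
Lemma fle_trans (u v w : F) : fle u v -> fle v w -> fle u w.
Proof. exact: connect_trans. Qed.
Lemma fcover_fle (u v : F) : fcover u v -> fle u v.
Proof. exact: connect1. Qed.
Lemma fcover_neq (u v : F) : fcover u v -> u != v.
Proof.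
move=> c; apply/negP=> /eqP e; have := fcover_hgt c; rewrite e; lia.
Qed.

Lemma fle_first (q r : F) : fle q r -> r != q -> exists2 u, fcover q u & fle u r.
Proof.
case/connectP=> [[|x p]] /= pth e; first by rewrite e eqxx.
case/andP: pth => c pth _; exists x => //; apply/connectP; by exists p.
Qed.

Lemma fle_last (r q : F) : fle r q -> r != q -> exists2 l, fle r l & fcover l q.
Proof.
case/connectP=> p; case/lastP: p => [|p x] /= pth e; first by rewrite e eqxx.
move: pth; rewrite rcons_path => /andP[pth c] _.
rewrite last_rcons in e; subst q.
exists (last r p) => //; apply/connectP; by exists p.
Qed.

Lemma two_up (q u1 u2 l : F) :
  fcover q u1 -> fcover q u2 -> u1 != u2 -> ~~ fcover l q.
Proof.
have cases (u : F) : fcover q u ->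
   (nat_of_ord u = q.+1 /\ step_up alpha q.+1) \/
   (nat_of_ord q = u.+1 /\ step_down alpha q).
  case/orP=> /andP[/eqP e s]; [left | right]; split => //; by rewrite e.
move=> /cases c1 /cases c2 ne.
have [su sd] : step_up alpha q.+1 /\ step_down alpha q.
  case: c1 c2 => [[e1 s1]|[e1 s1]] [[e2 s2]|[e2 s2]].
  - by rewrite (val_inj (etrans e1 (esym e2))) eqxx in ne.
  - by [].
  - by [].
  - have e : u1 = u2 by apply: val_inj => /=; lia.
    by rewrite e eqxx in ne.
apply/negP; case/orP=> /andP[/eqP e s].
- by rewrite -e in s; exact: step_excl s sd.
- exact: step_excl su s.
Qed.

Lemma cover_cases (q : F) :
  (forall u, ~~ fcover q u) \/
  (exists2 u, fcover q u & forall u', fcover q u' -> u' = u) \/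
  (forall l, ~~ fcover l q).
Proof.
case: (pickP (fcover q)) => [u1 c1|none]; last by left => u; rewrite none.
case: (pickP (fun u => fcover q u && (u != u1))) => [u2 /andP[c2 ne]|none2].
  by right; right => l; exact: two_up c2 c1 ne.
right; left; exists u1 => // u' c'; apply/eqP.
by move: (none2 u'); rewrite c' /= => /negbFE.
Qed.

End Comb.

Section Ideals.
Variable alpha : seq nat.
Local Notation F := (fence alpha).

Lemma ideal_down (I : ideal alpha) (p q : F) : fle p q -> q \in sval I -> p \in sval I.
Proof.
move=> pq qI; have := svalP I.
by move/forallP/(_ p)/forallP/(_ q)/implyP/(_ pq)/implyP/(_ qI).
Qed.

Lemma max_in_top (I : {set F}) q : (forall u, ~~ fcover q u) -> max_in I q = (q \in I).
Proof.
move=> nu; rewrite /max_in; case: (q \in I) => //=; apply/forallP=> r.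
apply/implyP=> _; apply/implyP=> qr.
apply/negPn/negP=> ne; case: (fle_first qr ne) => u c _.
by rewrite (negbTE (nu u)) in c.
Qed.

Lemma minc_bot (I : {set F}) q : (forall l, ~~ fcover l q) -> min_compl I q = (q \notin I).
Proof.
move=> nl; rewrite /min_compl; case: (q \notin I) => //=; apply/forallP=> r.
apply/implyP=> _; apply/implyP=> rq.
apply/negPn/negP=> ne; case: (fle_last rq ne) => l _ c.
by rewrite (negbTE (nl l)) in c.
Qed.

Lemma max_in_one (I : ideal alpha) q u : fcover q u ->
  (forall u', fcover q u' -> u' = u) ->
  max_in (sval I) q = (q \in sval I) && (u \notin sval I).
Proof.
move=> c un; rewrite /max_in; case qI: (q \in sval I) => //=.
apply/forallP/idP => [H | uI r].
- apply/negP=> uI; move: (H u); rewrite uI (fcover_fle c) /= => /eqP e.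
  by have := fcover_neq c; rewrite e eqxx.
- apply/implyP => rI; apply/implyP => qr; apply/negPn/negP => ne.
  case: (fle_first qr ne) => u' c' u'r; rewrite (un _ c') in u'r.
  by rewrite (ideal_down u'r rI) in uI.
Qed.

Lemma max_rho (I : {set F}) q : max_in (rowmotion_set I) q = min_compl I q.
Proof.
apply/idP/idP.
- case/andP => qR /forallP H; move: (qR); rewrite inE => /existsP[m /andP[mm qm]].
  have mR : m \in rowmotion_set I.
    by rewrite inE; apply/existsP; exists m; rewrite mm fle_refl.
  by move: (H m); rewrite mR qm /= => /eqP <-.
- move=> mq; have qR : q \in rowmotion_set I.
    by rewrite inE; apply/existsP; exists q; rewrite mq fle_refl.
  rewrite /max_in qR /=; apply/forallP => r; apply/implyP.
  rewrite inE => /existsP[m /andP[mm rm]]; apply/implyP => qr.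
  have qm := fle_trans qr rm.
  case/andP: (mq) => qI _.
  case/andP: mm => mI /forallP/(_ q); rewrite qI qm /= => /eqP eqm.
  subst m; apply/eqP; exact: fle_anti rm qr.
Qed.

Lemma minc_exists (I : {set F}) p : p \notin I -> exists2 m, min_compl I m & fle m p.
Proof.
move: {2}#|[set r | fle r p]| (leqnn #|[set r | fle r p]|) => k.
elim: k p => [|k IH] p hk pI.
  have : p \in [set r | fle r p] by rewrite inE fle_refl.
  by rewrite leqn0 cards_eq0 in hk; move/eqP: hk => ->; rewrite inE.
case mp: (min_compl I p); first by exists p => //; exact: fle_refl.
move: mp; rewrite /min_compl pI /= => /negbT; rewrite negb_forall => /existsP[r].
rewrite negb_imply => /andP[rI]; rewrite negb_imply => /andP[rp ne].
have lt : #|[set s | fle s r]| < #|[set s | fle s p]|.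
  apply: proper_card; apply/properP; split.
  - apply/subsetP=> s; rewrite !inE => sr; exact: fle_trans sr rp.
  - exists p; rewrite !inE ?fle_refl //; apply/negP => pr.
    by rewrite (fle_anti pr rp) eqxx in ne.
case: (IH r _ rI) => [|m mm mr]; first by lia.
by exists m => //; exact: fle_trans mr rp.
Qed.

Lemma rho_inj : injective (@rowmotion alpha).
Proof.
move=> I J /(congr1 sval) /= e.
have mm q : min_compl (sval I) q = min_compl (sval J) q by rewrite -!max_rho e.
apply: val_inj; apply/setP => p.
have key (K : ideal alpha) :
    (p \in sval K) = ~~ [exists m, min_compl (sval K) m && fle m p].
  apply/idP/idP.
  - move=> pK; apply/negP => /existsP[m /andP[/andP[mK _] mp]].
    by rewrite (ideal_down mp pK) in mK.
  - apply: contraR => pK; case: (minc_exists pK) => m mm' mp.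
    by apply/existsP; exists m; rewrite mm' mp.
rewrite !key; congr (~~ _); apply: eq_existsb => m; by rewrite mm.
Qed.

Lemma down_ideal p : is_ideal [set r : F | fle r p].
Proof.
apply/forallP=> a; apply/forallP=> b; apply/implyP=> ab; apply/implyP.
rewrite !inE; exact: fle_trans.
Qed.

Lemma down'_ideal p : is_ideal [set r : F | fle r p & r != p].
Proof.
apply/forallP=> a; apply/forallP=> b; apply/implyP=> ab; apply/implyP.
rewrite !inE => /andP[bp bne].
rewrite (fle_trans ab bp) /=; apply/negP => /eqP e; subst a.
by rewrite (fle_anti bp ab) eqxx in bne.
Qed.

Definition Dn p : ideal alpha := exist (@is_ideal alpha) _ (down_ideal p).
Definition Dn' p : ideal alpha := exist (@is_ideal alpha) _ (down'_ideal p).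

Lemma max_Dn p q : max_in (sval (Dn p)) q = (q == p).
Proof.
rewrite /max_in /= inE; apply/idP/idP.
- case/andP=> qp /forallP/(_ p); rewrite inE fle_refl qp /=.
  by move/eqP ->.
- move/eqP->; rewrite fle_refl /=; apply/forallP=> r; rewrite inE.
  apply/implyP=> rp; apply/implyP=> pr; apply/eqP; exact: fle_anti rp pr.
Qed.

End Ideals.

Local Open Scope ring_scope.
Lemma free_enum (R : fieldType) (vT : vectType R) (T : finType) (g : T -> vT) :
  (forall k : T -> R, (\sum_t k t *: g t = 0)%R -> forall t, k t = 0%R) ->
  free [seq g t | t <- enum T].
Proof.
move=> H.
have sz : size [seq g t | t <- enum T] == #|T| by rewrite size_map -cardE.
apply/(@freeP _ _ #|T| (Tuple sz)) => k hk i.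
pose k' t := k (enum_rank t).
have hk' : (\sum_t k' t *: g t = 0)%R.
  rewrite -[RHS]hk (reindex (@enum_val T T)) /=; last first.
    by exists enum_rank => x _; [rewrite enum_valK | rewrite enum_rankK].
  apply: eq_bigr => j _; rewrite /k' enum_valK; congr (_ *: _).
  have -> : [seq g t | t <- enum T] = [seq g t | t in T] by [].
  by rewrite nth_image.
by have := H k' hk' (enum_val i); rewrite /k' enum_valK.
Qed.

Section Stat.
Variable R : realType.
Variable alpha : seq nat.
Local Notation F := (fence alpha).
Local Notation stat := (stat R alpha).
Local Notation chi := (@chi R alpha).
Local Notation chihat := (@chihat R alpha).
Local Notation rho_orbit := (@rho_orbit alpha).
Local Notation homomesic := (@homomesic R alpha).

Definition one : stat := [ffun _ => 1].
Definition Tp (q : F) : stat :=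
  [ffun I : ideal alpha => if min_compl (sval I) q then 1 else 0].

Lemma orbit_rho (f : stat) I :
  \sum_(J in rho_orbit I) f (rowmotion J) = \sum_(J in rho_orbit I) f J.
Proof.
symmetry; rewrite (reindex_inj (@rho_inj alpha)) /=.
apply: eq_bigl => J; rewrite !inE; symmetry; exact: same_fconnect1_r (@rho_inj alpha) _ _.
Qed.

Lemma chi_rho q J : chi q (rowmotion J) = Tp q J.
Proof. by rewrite !ffunE /= max_rho. Qed.

Lemma card_orbit_gt0 I : (0 < #|rho_orbit I|)%N.
Proof. by apply/card_gt0P; exists I; rewrite inE connect0. Qed.

Lemma homomesic_diff q : homomesic (chi q - Tp q).
Proof.
exists 0 => I; rewrite /orbit_avg.
have -> : \sum_(J in rho_orbit I) (chi q - Tp q) J = 0.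
  have e J : (chi q - Tp q) J = chi q J - chi q (rowmotion J).
    by rewrite chi_rho !ffunE.
  under eq_bigr => J _ do rewrite e.
  by rewrite sumrB orbit_rho subrr.
by rewrite mul0r.
Qed.

Lemma homomesic_one : homomesic one.
Proof.
exists 1 => I; rewrite /orbit_avg.
under eq_bigr => J _ do rewrite ffunE.
rewrite sumr_const divff //.
by rewrite pnatr_eq0 -lt0n card_orbit_gt0.
Qed.

Lemma exists_H : exists Hs : {vspace stat}, forall f, homomesic f <-> f \in Hs.
Proof.
pose osum (f : stat) : stat := [ffun I => \sum_(J in rho_orbit I) f J].
have lin : linear osum.
  move=> a f g; apply/ffunP=> I; rewrite !ffunE.
  rewrite scaler_sumr -big_split /=; apply: eq_bigr => J _; by rewrite !ffunE.
pose flM := GRing.isLinear.Build _ _ _ _ osum lin.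
pose fL : {linear stat -> stat} := HB.pack osum flM.
exists (lker (linfun fL) + <[one]>)%VS => f; split.
- case=> c hc; apply/memv_addP; exists (f - c *: one); last first.
    by exists (c *: one); [apply/vlineP; exists c | rewrite subrK].
  rewrite memv_ker lfunE /=; apply/eqP/ffunP=> I; rewrite !ffunE.
  under eq_bigr => J _ do rewrite !ffunE.
  rewrite sumrB sumr_const -[c%:A]/(c * 1) mulr1 -mulr_natr.
  have := hc I; rewrite /orbit_avg => <-.
  rewrite mulfVK ?subrr //.
  by rewrite pnatr_eq0 -lt0n card_orbit_gt0.
- case/memv_addP=> z zZ [w /vlineP[k ->] ->]; exists k => I.
  rewrite memv_ker lfunE /= in zZ.
  have := congr1 (fun g : stat => g I) (eqP zZ); rewrite !ffunE => z0.
  rewrite /orbit_avg.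
  under eq_bigr => J _ do rewrite !ffunE.
  rewrite big_split /= z0 add0r sumr_const -[_%:A *+ _]mulr_natr mulfK; first exact: mulr1.
  by rewrite pnatr_eq0 -lt0n card_orbit_gt0.
Qed.

End Stat.

Lemma zm1 (V : zmodType) (a c o : V) : a = o - c + (c - (o - a)).
Proof. by rewrite addrA addrNK opprB addrC addrNK. Qed.

Lemma zm2 (V : zmodType) (a c o : V) : c = (c - (o - a) + o) - a.
Proof. by rewrite opprB -addrA -[o - a]opprB addrK. Qed.

Section Main.
Variable R : realType.
Variable alpha : seq nat.
Local Notation F := (fence alpha).
Local Notation stat := (stat R alpha).
Local Notation chi := (@chi R alpha).
Local Notation chihat := (@chihat R alpha).
Local Notation homomesic := (@homomesic R alpha).
Local Notation one := (@one R alpha).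
Local Notation Tp := (@Tp R alpha).

Lemma chi_top q : (forall u, ~~ fcover q u) -> chi q = chihat q.
Proof. by move=> nu; apply/ffunP=> I; rewrite !ffunE max_in_top. Qed.

Lemma chi_one q u : fcover q u -> (forall u', fcover q u' -> u' = u) ->
  chi q = chihat q - chihat u.
Proof.
move=> c un; apply/ffunP=> I; rewrite !ffunE (max_in_one _ c un).
case uI: (u \in sval I).
  by rewrite (ideal_down (fcover_fle c) uI) /= subrr.
by case: (q \in sval I); rewrite /= subr0.
Qed.

Lemma Tp_bot q : (forall l, ~~ fcover l q) -> Tp q = one - chihat q.
Proof.
move=> nl; apply/ffunP=> I; rewrite !ffunE minc_bot //.
by case: (q \in sval I); rewrite /= ?subrr ?subr0.
Qed.

Lemma chihat_free : free [seq chihat q | q <- enum F].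
Proof.
apply: free_enum => k hk p.
have := congr1 (fun f : stat => f (Dn p) - f (Dn' p)) hk.
rewrite /= !ffunE subrr !sum_ffunE -sumrB.
have e q : (k q *: chihat q) (Dn p) - (k q *: chihat q) (Dn' p) =
           if q == p then k q else 0.
  rewrite !ffunE /= !inE; case: (eqVneq q p) => [->|ne].
    by rewrite fle_refl /= scaler0 subr0; exact: mulr1.
  by rewrite andbT subrr.
under eq_bigr => q _ do rewrite e.
by rewrite -big_mkcond /= big_pred1_eq.
Qed.

Lemma chi_free : free [seq chi q | q <- enum F].
Proof.
apply: free_enum => k hk p.
have := congr1 (fun f : stat => f (Dn p)) hk.
rewrite /= !ffunE !sum_ffunE.
have e q : (k q *: chi q) (Dn p) = if q == p then k q else 0.
  rewrite !ffunE max_Dn; case: (q == p) => //; [exact: mulr1 | exact: mulr0].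
under eq_bigr => q _ do rewrite e.
by rewrite -big_mkcond /= big_pred1_eq.
Qed.

End Main.

Section Final.
Variable R : realType.
Variable alpha : seq nat.
Local Notation F := (fence alpha).
Local Notation stat := (stat R alpha).
Local Notation chi := (@chi R alpha).
Local Notation chihat := (@chihat R alpha).
Local Notation homomesic := (@homomesic R alpha).
Local Notation one := (@one R alpha).
Local Notation Tp := (@Tp R alpha).
Local Notation S1 := (@span_chihat R alpha).
Local Notation S2 := (@span_chi R alpha).

Lemma claimA (Hs : {vspace stat}) : (forall f, homomesic f <-> f \in Hs) ->
  (S1 + Hs = S2 + Hs)%VS.
Proof.
move=> hH.
have oneH : one \in Hs by apply/hH; exact: homomesic_one.
have dH q : chi q - Tp q \in Hs by apply/hH; exact: homomesic_diff.
have S1q q : chihat q \in S1.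
  by apply: memv_span; apply/mapP; exists q => //; rewrite mem_enum.
have S2q q : chi q \in S2.
  by apply: memv_span; apply/mapP; exists q => //; rewrite mem_enum.
have in1 v : v \in S1 -> v \in (S1 + Hs)%VS by apply/subvP/addvSl.
have in2 v : v \in S2 -> v \in (S2 + Hs)%VS by apply/subvP/addvSl.
have chiS q : chi q \in (S1 + Hs)%VS.
  case: (cover_cases q) => [nu|[[u c un]|nl]].
  - by rewrite (@chi_top R alpha q nu); exact: in1.
  - by rewrite (@chi_one R alpha q u c un); apply: in1; apply: rpredB.
  - rewrite (zm2 (chihat q) (chi q) one) -(@Tp_bot R alpha q nl).
    apply/memv_addP; exists (- chihat q); first by rewrite rpredN.
    by exists (chi q - Tp q + one); [exact: rpredD | rewrite addrC].
have chihatS q : chihat q \in (S2 + Hs)%VS.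
  move: {2}#|[set r | fle q r]| (leqnn #|[set r | fle q r]|) => k.
  elim: k q => [|k IH] q hk.
    have : q \in [set r | fle q r] by rewrite inE fle_refl.
    by rewrite leqn0 cards_eq0 in hk; move/eqP: hk => ->; rewrite inE.
  case: (cover_cases q) => [nu|[[u c un]|nl]].
  - by rewrite -(@chi_top R alpha q nu); exact: in2.
  - have -> : chihat q = chi q + chihat u by rewrite (@chi_one R alpha q u c un) subrK.
    apply: rpredD; first exact: in2.
    apply: IH.
    have lt : (#|[set s | fle u s]| < #|[set s | fle q s]|)%N.
      apply: proper_card; apply/properP; split.
      - apply/subsetP=> s; rewrite !inE => us; exact: fle_trans (fcover_fle c) us.
      - exists q; rewrite !inE ?fle_refl //; apply/negP => uq.
        have e := fle_anti (fcover_fle c) uq.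
        by have := fcover_neq c; rewrite e eqxx.
    by move: lt hk; clear; lia.
  - rewrite (zm1 (chihat q) (chi q) one) -(@Tp_bot R alpha q nl).
    apply: rpredD; last exact: (subvP (addvSr _ _)).
    apply/memv_addP; exists (- chi q); first by rewrite rpredN.
    by exists one; [exact: oneH | rewrite addrC].
apply: subv_anti; rewrite !subv_add !addvSr !andbT; apply/andP; split;
  apply/span_subvP => v /mapP[q _ ->]; auto.
Qed.

Lemma has_dim_of (P : stat -> Prop) (W : {vspace stat}) :
  (forall f, P f <-> f \in W) -> has_dim P (\dim W).
Proof.
move=> hP; exists (vbasis W); split.
- exact: size_tuple.
- exact: basis_free (vbasisP W).
- by move=> v /vbasis_mem /hP.
- by move=> v /hP; rewrite (span_basis (vbasisP W)).
Qed.

End Final.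

Theorem theorem7p1 (R : realType) (alpha : seq nat) :
  is_fence_param alpha ->
  exists d : nat, has_dim (@I_H R alpha) d /\ has_dim (@A_H R alpha) d.
Proof.
move=> _; have [Hs hH] := exists_H R alpha.
have eA := claimA hH.
have d1 := eqP (chihat_free R alpha).
have d2 := eqP (chi_free R alpha).
rewrite size_map in d1; rewrite size_map in d2.
have c1 := dimv_sum_cap (span_chihat R alpha) Hs.
have c2 := dimv_sum_cap (span_chi R alpha) Hs.
have eq12 : \dim (span_chihat R alpha :&: Hs)%VS = \dim (span_chi R alpha :&: Hs)%VS.
  rewrite /span_chihat /span_chi in c1 c2 eA *.
  rewrite eA d1 in c1; rewrite d2 in c2; lia.
exists (\dim (span_chihat R alpha :&: Hs)%VS); split.
- apply: has_dim_of => f; rewrite memv_cap /I_H; split.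
  + by case=> a /hH b; rewrite a b.
  + by case/andP=> a /hH b.
- rewrite eq12; apply: has_dim_of => f; rewrite memv_cap /A_H; split.
  + by case=> a /hH b; rewrite a b.
  + by case/andP=> a /hH b.
Qed.
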